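(* Let $k\ge 3$, let $H$ be a connected $k$-uniform hypergraph on vertex set $V$, and let $y$ and $x$ be the principal eigenvectors of $H$ and of $\partial^*H$, respectively. Put $\hat y=(y_v^k)_{v\in V}$ and $\hat x=(x_v^2)_{v\in V}$. Then \[ D(\hat y,\hat x):=\max_{v\in V}\,|y_v^k-x_v^2|\le \tfrac12 . \] Moreover, if $\Delta_k:=\sup_{H} D(\hat y,\hat x)$, the supremum taken over all connected $k$-uniform hypergraphs $H$, then $\lim_{k\to\infty}\Delta_k=\tfrac12$.
   Context: For a connected $k$-uniform hypergraph $H=([n],E)$, writing $x^e=\prod_{v\in e}x_v$, its principal eigenvector is the unique strictly positive $y$ with $\|y\|_k=1$ and $\rho\, y_i^{k-1}=\sum_{e\ni i}y^{e\setminus\{i\}}$ for all $i$, where $\rho=\max_{\|z\|_k^k=1}k\sum_{e\in E}z^e$. The clique-shadow $\partial^*H$ is the multigraph on $[n]$ in which $\{u,v\}$ has multiplicity $\mu(uv)=|\{e\in E:u,v\in e\}|$; its principal eigenvector is the positive Perron eigenvector of its adjacency matrix (entries $\mu(uv)$), normalized to unit $2$-norm. *)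

(* Defs.v *)
From HB Require Import structures.
From mathcomp Require Import all_boot all_order all_algebra.
From mathcomp Require Import all_classical all_reals all_analysis.
Set Implicit Arguments. Unset Strict Implicit. Unset Printing Implicit Defensive.
Import Order.TTheory GRing.Theory Num.Theory.
Local Open Scope ring_scope.
Local Open Scope classical_set_scope.

(* A hypergraph on vertex set [n] = 'I_n is given by its edge set
   E : {set {set 'I_n}}. *)

Definition kuniform (k n : nat) (E : {set {set 'I_n}}) : Prop :=
  forall e, e \in E -> #|e| = k.

Definition hadj (n : nat) (E : {set {set 'I_n}}) : rel 'I_n :=
  fun u v => [exists e, (e \in E) && (u \in e) && (v \in e)].

Definition hconnected (n : nat) (E : {set {set 'I_n}}) : Prop :=
  forall u v : 'I_n, connect (hadj E) u v.

Definition is_max (R : realType) (S : set R) (r : R) : Prop :=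
  S r /\ forall s, S s -> s <= r.

Definition rho_set (R : realType) (k n : nat) (E : {set {set 'I_n}}) : set R :=
  [set r | exists z : 'I_n -> R,
       \sum_(i < n) `|z i| ^+ k = 1 /\
       r = k%:R * \sum_(e in E) \prod_(v in e) z v].

Definition hyp_principal (R : realType) (k n : nat) (E : {set {set 'I_n}})
    (y : 'I_n -> R) : Prop :=
  (forall i, 0 < y i) /\
  \sum_(i < n) y i ^+ k = 1 /\
  exists rho : R, is_max (@rho_set R k n E) rho /\
    forall i : 'I_n,
      rho * y i ^+ k.-1 = \sum_(e in E | i \in e) \prod_(v in e :\ i) y v.

(* multiplicity of the pair {u,v} in the clique-shadow (no loops) *)
Definition mu (R : realType) (n : nat) (E : {set {set 'I_n}}) (u v : 'I_n) : R :=
  if u == v then 0 else #|[set e in E | (u \in e) && (v \in e)]|%:R.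

Definition shadow_principal (R : realType) (n : nat) (E : {set {set 'I_n}})
    (x : 'I_n -> R) : Prop :=
  (forall i, 0 < x i) /\
  \sum_(i < n) x i ^+ 2 = 1 /\
  exists lam : R, forall u : 'I_n,
      \sum_(v < n) @mu R n E u v * x v = lam * x u.

Definition Ddist (R : realType) (k n : nat) (y x : 'I_n -> R) : R :=
  \big[Num.max/0]_(v < n) `|y v ^+ k - x v ^+ 2|.

Definition Delta (R : realType) (k : nat) : R :=
  sup [set d : R | exists (n : nat) (E : {set {set 'I_n}}) (y x : 'I_n -> R),
         [/\ kuniform k E, hconnected E, @hyp_principal R k n E y,
             @shadow_principal R n E x & d = @Ddist R k n y x]].

(* Main.v *)
Require Import Defs.
From HB Require Import structures.
From mathcomp Require Import all_boot all_order all_algebra.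
From mathcomp Require Import all_classical all_reals all_analysis.
From mathcomp Require Import ring lra zify.
Import Order.TTheory GRing.Theory Num.Theory.
Import numFieldNormedType.Exports.
Local Open Scope ring_scope.
Set Implicit Arguments. Unset Strict Implicit.

Section P.
Variable R : realType.

Lemma eig_sum k n (E : {set {set 'I_n}}) (y : 'I_n -> R) rho :
  (0 < k)%N ->
  (forall i, rho * y i ^+ k.-1 = \sum_(e in E | i \in e) \prod_(v in e :\ i) y v) ->
  forall i, rho * y i ^+ k = \sum_(e in E | i \in e) \prod_(v in e) y v.
Proof.
move=> k0 H i; rewrite -(prednK k0) exprS mulrCA H mulr_sumr.
by apply: eq_bigr => e /andP[_ ie]; rewrite (big_setD1 i ie).
Qed.

Lemma rho_total k n (E : {set {set 'I_n}}) (y : 'I_n -> R) rho :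
  (0 < k)%N -> kuniform k E ->
  (forall i, rho * y i ^+ k.-1 = \sum_(e in E | i \in e) \prod_(v in e :\ i) y v) ->
  rho * \sum_i y i ^+ k = k%:R * \sum_(e in E) \prod_(v in e) y v.
Proof.
move=> k0 U H; rewrite mulr_sumr.
transitivity (\sum_(i < n) \sum_(e in E) (if i \in e then \prod_(v in e) y v else 0)).
  by apply: eq_bigr => i _; rewrite (eig_sum k0 H) big_mkcondr.
rewrite exchange_big mulr_sumr; apply: eq_bigr => e eE.
by rewrite -big_mkcond /= sumr_const (U e eE) mulr_natl.
Qed.

Lemma le_sum1 (I : finType) (F : I -> R) (j : I) :
  (forall i, 0 <= F i) -> F j <= \sum_i F i.
Proof.
move=> F0; rewrite (bigD1 j) //= lerDl; exact: sumr_ge0.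
Qed.

Lemma mu_ge0 n (E : {set {set 'I_n}}) u v : 0 <= mu R E u v.
Proof. by rewrite /mu; case: eqP. Qed.

Lemma mu_sym n (E : {set {set 'I_n}}) u v : mu R E u v = mu R E v u.
Proof.
rewrite /mu eq_sym; case: ifP => // _; congr (_%:R); apply: eq_card => e; idtac.
rewrite !inE; case: (e \in E) => //=; exact: andbC.
Qed.

Lemma mu_diag n (E : {set {set 'I_n}}) u : mu R E u u = 0.
Proof. by rewrite /mu eqxx. Qed.


Lemma ybound k n (E : {set {set 'I_n}}) (y : 'I_n -> R) rho w e0 :
  (3 <= k)%N -> kuniform k E -> (forall i, 0 < y i) -> \sum_i y i ^+ k = 1 ->
  (forall i, rho * y i ^+ k.-1 = \sum_(e in E | i \in e) \prod_(v in e :\ i) y v) ->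
  e0 \in E -> y w ^+ k <= 1/2.
Proof.
move=> k3 U ypos ysum H e0E.
have k0 : (0 < k)%N by apply: leq_trans k3.
have tot := rho_total k0 U H; rewrite ysum mulr1 in tot.
set S := \sum_(e in E) _ in tot.
have Spos : 0 < S.
  apply: (@lt_le_trans _ _ (\prod_(v in e0) y v)); first by apply: prodr_gt0 => v _.
  rewrite /S (bigD1 e0) //= lerDl; apply: sumr_ge0 => e _; apply: prodr_ge0 => v _.
  exact: ltW.
have le1 : rho * y w ^+ k <= S.
  rewrite (eig_sum k0 H) /S big_mkcondr; apply: ler_sum => e _.
  by case: ifP => // _; apply: prodr_ge0 => v _; exact: ltW.
rewrite tot in le1.
have yk0 : 0 <= y w ^+ k by apply: exprn_ge0; exact: ltW.
have k3R : 3%:R <= k%:R :> R by rewrite ler_nat.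
have : k%:R * y w ^+ k <= 1.
  by rewrite -(ler_pM2l Spos) mulr1 mulrA [S * _]mulrC.
move: k3R yk0; set K := k%:R; set t := y w ^+ k => *; nra.
Qed.

Lemma xbound n (E : {set {set 'I_n}}) (x : 'I_n -> R) lam w u0 :
  (forall i, 0 < x i) -> \sum_i x i ^+ 2 = 1 ->
  (forall u, \sum_v mu R E u v * x v = lam * x u) ->
  0 < mu R E w u0 -> x w ^+ 2 <= 1/2.
Proof.
move=> xpos xsum H mu0.
set M := mu R E w.
have M0 : forall u, 0 <= M u by move=> u; exact: mu_ge0.
have xw := xpos w.
have lampos : 0 < lam.
  have : M u0 * x u0 <= lam * x w.
    rewrite -H; refine (le_sum1 (F := fun v => M v * x v) u0 _) => v.
    by rewrite mulr_ge0 // ltW.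
  have := xpos u0; move: xw mu0; rewrite /M => *; nra.
set Q := \sum_u M u ^+ 2.
have lamQ : Q <= lam ^+ 2.
  have : Q * x w <= lam ^+ 2 * x w.
    rewrite expr2 -mulrA -H mulr_sumr /Q mulr_suml; apply: ler_sum => u _.
    rewrite mulrCA -H expr2 -mulrA.
    change (M u * (M u * x w) <= M u * \sum_v mu R E u v * x v); apply: (ler_wpM2l (M0 u)).
    rewrite /M mu_sym; refine (le_sum1 (F := fun v => mu R E u v * x v) w _) => v.
    by rewrite mulr_ge0 ?mu_ge0 // ltW.
  by rewrite ler_pM2r.
have key : \sum_(u | u != w) (2 * x w * lam * (M u * x u)) <=
    \sum_(u | u != w) (x w ^+ 2 * M u ^+ 2 + lam ^+ 2 * x u ^+ 2).
  apply: ler_sum => u _; rewrite -subr_ge0.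
  have -> : x w ^+ 2 * M u ^+ 2 + lam ^+ 2 * x u ^+ 2 - 2 * x w * lam * (M u * x u)
     = (x w * M u - lam * x u) ^+ 2 by ring.
  exact: sqr_ge0.
rewrite -mulr_sumr big_split /= -!mulr_sumr in key.
have H1 := H w; rewrite (bigD1 w) //= mu_diag mul0r add0r in H1.
have Q1 : Q = \sum_(u | u != w) M u ^+ 2.
  by rewrite /Q (bigD1 w) //= /M mu_diag expr0n /= add0r.
have X1 := xsum; rewrite (bigD1 w) //= in X1.
rewrite -/M H1 -Q1 in key.
have X2 : \sum_(i | i != w) x i ^+ 2 = 1 - x w ^+ 2 by rewrite -X1 addrAC subrr add0r.
rewrite X2 in key.
set a := x w in key lamQ lampos xw *; set q := Q in key lamQ *.
have q0 : 0 <= q by rewrite /q /Q; apply: sumr_ge0 => u _; exact: sqr_ge0.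
have e1 : 2 * a * lam * (lam * a) = 2 * (a ^+ 2 * lam ^+ 2) by ring.
rewrite e1 in key.
have e2 : a ^+ 2 * q <= a ^+ 2 * lam ^+ 2 by apply: ler_wpM2l => //; exact: sqr_ge0.
have L0 : 0 < lam ^+ 2 by rewrite exprn_gt0.
have : lam ^+ 2 * (a ^+ 2 * 2) <= lam ^+ 2 * 1.
  move: key e2; set A := a ^+ 2; set L := lam ^+ 2 => *; lra.
rewrite ler_pM2l // => h; lra.
Qed.

Lemma sum_single n (F : 'I_n -> R) w : (forall u, u = w) -> \sum_i F i = F w.
Proof.
move=> all; rewrite (bigD1 w) //= big1 ?addr0 // => i iw.
by move: iw; rewrite (all i) eqxx.
Qed.

Lemma part1 k n (E : {set {set 'I_n}}) (y x : 'I_n -> R) :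
  (3 <= k)%N -> kuniform k E -> hconnected E ->
  hyp_principal k E y -> shadow_principal E x -> Ddist k y x <= 1 / 2.
Proof.
move=> k3 U conn [ypos [ysum [rho [_ eig]]]] [xpos [xsum [lam xeig]]].
rewrite /Ddist; apply: bigmax_le => [|w _]; first lra.
case: (boolP [exists e, (e \in E) && (w \in e)]) => [/existsP [e0 /andP[e0E we0]]|noe].
- have yk := ybound w k3 U ypos ysum eig e0E.
  have [u0 Hu0] : exists u0, u0 \in e0 :\ w.
    apply/set0Pn; rewrite -card_gt0.
    have := cardsD1 w e0; rewrite we0 (U e0 e0E) => h.
    by move: k3; rewrite h add1n ltnS; apply: leq_trans.
  have mu0 : 0 < mu R E w u0.
    move: Hu0; rewrite in_setD1 => /andP[u0w u0e].
    rewrite /mu eq_sym (negbTE u0w) ltr0n card_gt0; apply/set0Pn; exists e0.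
    by rewrite !inE e0E we0 u0e.
  have xk := xbound xpos xsum xeig mu0.
  have y0 : 0 <= y w ^+ k by apply: exprn_ge0; exact: ltW.
  have x0 : 0 <= x w ^+ 2 by exact: sqr_ge0.
  rewrite ler_norml; apply/andP; split; lra.
- have all : forall u, u = w.
    move=> u; have /connectP [p pth ->] := conn w u.
    case: p pth => [|w' p] //= /andP[/existsP [e /andP[/andP[eE we] _]] _].
    by move: noe; rewrite negb_exists => /forallP /(_ e); rewrite eE we.
  rewrite (sum_single _ all) in ysum; rewrite (sum_single _ all) in xsum.
  by rewrite ysum xsum subrr normr0; lra.
Qed.


Lemma amgm (I : finType) (A : {pred I}) (u : I -> R) k :
  #|A| = k -> (0 < k)%N -> (forall i, 0 <= u i) ->
  \prod_(i in A) u i <= (\sum_(i in A) u i ^+ k) / k%:R.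
Proof.
move=> cA k0 u0.
have h := leif_AGM (A := A) (E := fun i => u i ^+ k) (fun i _ => exprn_ge0 k (u0 i)).
have h1 := h.1; rewrite /= cA in h1.
have h' : (\prod_(i in A) u i) ^+ k <= ((\sum_(i in A) u i ^+ k) / k%:R) ^+ k.
  by rewrite -prodrXl.
rewrite -(ler_pXn2r k0) // nnegrE.
- by apply: prodr_ge0 => i _.
- by rewrite divr_ge0 // sumr_ge0 // => i _; exact: exprn_ge0.
Qed.

Lemma exch n (E : {set {set 'I_n}}) (G : {set 'I_n} -> 'I_n -> R) :
  \sum_(e in E) \sum_(v in e) G e v = \sum_v \sum_(e in E | v \in e) G e v.
Proof.
rewrite [RHS](eq_bigr (fun v => \sum_(e in E) (if v \in e then G e v else 0))); last first.
  by move=> v _; rewrite big_mkcondr.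
rewrite exchange_big /=; apply: eq_bigr => e _; by rewrite big_mkcond.
Qed.

Lemma hyp_of k n (E : {set {set 'I_n}}) (y : 'I_n -> R) rho :
  (0 < k)%N -> kuniform k E -> (forall i, 0 < y i) -> \sum_i y i ^+ k = 1 ->
  (forall i, rho * y i ^+ k.-1 = \sum_(e in E | i \in e) \prod_(v in e :\ i) y v) ->
  hyp_principal k E y.
Proof.
move=> k0 U ypos ysum H.
have tot := rho_total k0 U H; rewrite ysum mulr1 in tot.
split=> //; split=> //; exists rho; split=> //; split.
  exists y; split; last by [].
  by rewrite -ysum; apply: eq_bigr => i _; rewrite ger0_norm // ltW.
move=> s [z [zs ->]].
set u := fun v => `|z v| / y v.
have u0 : forall v, 0 <= u v by move=> v; rewrite divr_ge0 // ltW.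
have ke : forall e, e \in E ->
   \prod_(v in e) z v <= (\prod_(v in e) y v) * ((\sum_(v in e) u v ^+ k) / k%:R).
  move=> e eE; apply: le_trans (ler_norm _) _.
  rewrite normr_prod.
  have -> : \prod_(v in e) `|z v| = \prod_(v in e) (y v * u v).
    apply: eq_bigr => v _; rewrite /u mulrCA divff ?mulr1 //.
    exact: lt0r_neq0.
  rewrite big_split /=; apply: ler_wpM2l; first by apply: prodr_ge0 => v _; exact: ltW.
  by apply: amgm => //; exact: U.
have kR : 0 < k%:R :> R by rewrite ltr0n.
apply: (@le_trans _ _ (k%:R * \sum_(e in E) ((\prod_(v in e) y v) * ((\sum_(v in e) u v ^+ k) / k%:R)))).
  by rewrite ler_pM2l //; apply: ler_sum.
have -> : k%:R * \sum_(e in E) ((\prod_(v in e) y v) * ((\sum_(v in e) u v ^+ k) / k%:R))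
  = \sum_(e in E) (\prod_(v in e) y v) * (\sum_(v in e) u v ^+ k).
  rewrite mulr_sumr; apply: eq_bigr => e _; rewrite mulrCA; congr (_ * _); rewrite mulrC divfK //.
  exact: lt0r_neq0.
have -> : \sum_(e in E) (\prod_(v in e) y v) * (\sum_(v in e) u v ^+ k)
   = \sum_(e in E) \sum_(v in e) (u v ^+ k * \prod_(w in e) y w).
  by apply: eq_bigr => e _; rewrite mulr_sumr; apply: eq_bigr => v _; rewrite mulrC.
rewrite exch.
have -> : \sum_v \sum_(e in E | v \in e) (u v ^+ k * \prod_(w in e) y w)
   = \sum_v rho * `|z v| ^+ k.
  apply: eq_bigr => v _; rewrite -mulr_sumr -(eig_sum k0 H) mulrCA /u exprMn exprVn.
  by rewrite divfK // expf_neq0 // lt0r_neq0.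
by rewrite -mulr_sumr zs mulr1.
Qed.

End P.

Definition Nn (q m : nat) := (m * q.+2)%N.
Definition Pv (q : nat) (v : nat) : nat := (v.-1 %/ q.+2)%N.
Definition ep (q m : nat) (p : 'I_m) : {set 'I_(Nn q m).+1} :=
  [set v : 'I_(Nn q m).+1 | (nat_of_ord v == 0%N) || (Pv q v == p)].
Definition EE (q m : nat) := [set ep q p | p : 'I_m].

Section W.
Variables (q m : nat).
Local Notation V := 'I_(Nn q m).+1.

Lemma Plt (v : V) : nat_of_ord v != 0%N -> (Pv q v < m)%N.
Proof.
move=> v0; rewrite /Pv ltn_divLR // -ltnS prednK ?lt0n //; exact: ltn_ord.
Qed.

Lemma mem_ep0 p : (ord0 : V) \in ep q p.
Proof. by rewrite inE eqxx. Qed.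

Lemma mem_ep (v : V) p : nat_of_ord v != 0%N -> (v \in ep q p) = (Pv q v == p).
Proof. by move=> v0; rewrite inE (negbTE v0). Qed.

Lemma ep_inj : injective (@ep q m).
Proof.
move=> p1 p2 e.
have h1 : (1 + p1 * q.+2 < (Nn q m).+1)%N.
  have := ltn_ord p1; rewrite /Nn => h; nia.
set z : V := inord (1 + p1 * q.+2).
have z0 : nat_of_ord z != 0%N by rewrite /z inordK.
have Pz : Pv q z = p1 by rewrite /z /Pv inordK // add1n /= mulnK.
have : z \in ep q p1 by rewrite mem_ep // Pz.
by rewrite e mem_ep // Pz => /eqP /val_inj.
Qed.

Lemma card_ep0 p : #|ep q p :\ (ord0 : V)| = q.+2.
Proof.
have hg : forall j : 'I_q.+2, (1 + p * q.+2 + j < (Nn q m).+1)%N.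
  move=> j; have := ltn_ord p; have := ltn_ord j; rewrite /Nn => *; nia.
pose g (j : 'I_q.+2) : V := inord (1 + p * q.+2 + j).
have ginj : injective g.
  move=> j1 j2 /(congr1 (@nat_of_ord _)); rewrite /g !inordK // => h; apply: val_inj => /=; lia.
have -> : ep q p :\ ord0 = [set g j | j in 'I_q.+2].
  apply/setP => v; rewrite in_setD1 inE; apply/idP/imsetP.
  - case/andP=> v0 /orP [/eqP h|/eqP h]; first by move: v0; rewrite -val_eqE /= h.
    have v0' : nat_of_ord v != 0%N by move: v0; rewrite -val_eqE.
    exists (Ordinal (ltn_pmod v.-1 (isT : (0 < q.+2)%N))) => //.
    have ev : nat_of_ord v = (v.-1).+1 by rewrite prednK // lt0n.
    have ed := divn_eq v.-1 q.+2.
    have e2 : (1 + p * q.+2 + v.-1 %% q.+2)%N = v.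
      rewrite -h /Pv; move: ev ed; set a := v.-1; set b := (a %/ q.+2)%N.
      set c := (a %% q.+2)%N; lia.
    by apply: val_inj; rewrite /= /g inordK e2.
  - case=> j _ ->; apply/andP; split.
      by rewrite -val_eqE /g /= inordK.
    apply/orP; right; rewrite /Pv /g inordK // add1n /= divnMDl // divn_small //.
    by rewrite addn0.
by rewrite card_imset // card_ord.
Qed.

Lemma card_ep (p : 'I_m) : #|ep q p| = q.+3.
Proof. by rewrite (cardsD1 ord0) mem_ep0 card_ep0. Qed.

Lemma EE_unif : kuniform q.+3 (EE q m).
Proof. by move=> e /imsetP [p _ ->]; exact: card_ep. Qed.

Lemma EE_conn : hconnected (EE q m).
Proof.
have h0 : forall w : V, connect (hadj (EE q m)) w ord0 /\ connect (hadj (EE q m)) ord0 w.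
  move=> w; case: (boolP (nat_of_ord w == 0%N)) => [w0|w0].
    by have -> : w = ord0 by apply: val_inj; apply/eqP.
  set p := Ordinal (Plt w0).
  have hw : w \in ep q p by rewrite mem_ep.
  have E1 : ep q p \in EE q m by apply: imset_f.
  split; apply: connect1; apply/existsP; exists (ep q p).
    by rewrite E1 hw mem_ep0.
  by rewrite E1 hw mem_ep0.
move=> u v; apply: (connect_trans (h0 u).1 (h0 v).2).
Qed.


Variable R : realType.

Definition fv (c p : R) (v : V) : R := if nat_of_ord v == 0%N then c else p.

Lemma myneq0 (v : V) : (v != ord0) = (nat_of_ord v != 0%N).
Proof. by rewrite -val_eqE. Qed.

Lemma fv_ne0 c p (v : V) : v != ord0 -> fv c p v = p.
Proof. by rewrite myneq0 /fv => /negbTE ->. Qed.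

Lemma fv0 c p : fv c p ord0 = c.
Proof. by []. Qed.

Lemma sumEE (F : {set V} -> R) (i : V) :
  \sum_(e in EE q m | i \in e) F e = \sum_(p < m) (if i \in ep q p then F (ep q p) else 0).
Proof.
rewrite big_mkcondr big_imset /=; last by move=> p1 p2 _ _; exact: ep_inj.
by apply: eq_bigl => p; rewrite inE.
Qed.

Lemma eig_center c p :
  \sum_(e in EE q m | ord0 \in e) \prod_(v in e :\ ord0) fv c p v = p ^+ q.+2 *+ m.
Proof.
rewrite sumEE (eq_bigr (fun _ => p ^+ q.+2)) ?sumr_const ?card_ord //.
move=> r _; rewrite mem_ep0 (eq_bigr (fun _ => p)) ?prodr_const ?card_ep0 //.
by move=> v; rewrite in_setD1 => /andP [v0 _]; rewrite fv_ne0.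
Qed.

Lemma card_S (i : V) (i0 : nat_of_ord i != 0%N) :
  #|ep q (Ordinal (Plt i0)) :\ i :\ ord0| = q.+1.
Proof.
have h := card_ep0 (Ordinal (Plt i0)).
rewrite (cardsD1 i) in_setD1 myneq0 i0 mem_ep //= eqxx /= in h.
have -> : ep q (Ordinal (Plt i0)) :\ i :\ ord0 = ep q (Ordinal (Plt i0)) :\ ord0 :\ i.
  by apply/setP => v; rewrite !in_setD1 andbCA.
by case: h.
Qed.

Lemma eig_petal c p (i : V) : nat_of_ord i != 0%N ->
  \sum_(e in EE q m | i \in e) \prod_(v in e :\ i) fv c p v = c * p ^+ q.+1.
Proof.
move=> i0; rewrite sumEE (bigD1 (Ordinal (Plt i0))) //= [X in _ + X]big1 ?addr0.
  rewrite mem_ep //= eqxx (big_setD1 ord0) /=; last first.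
    by rewrite in_setD1 mem_ep0 andbT eq_sym myneq0.
  rewrite fv0; congr (_ * _).
  rewrite (eq_bigr (fun _ => p)) ?prodr_const ?card_S //.
  by move=> v; rewrite in_setD1 => /andP [v0 _]; rewrite fv_ne0.
move=> r hr; rewrite mem_ep //; case: eqP => // h.
by move: hr; rewrite -val_eqE /= h eqxx.
Qed.

Lemma sum_fv c p k : \sum_(i : V) fv c p i ^+ k = c ^+ k + p ^+ k *+ Nn q m.
Proof.
rewrite big_ord_recl fv0; congr (_ + _).
by rewrite (eq_bigr (fun _ => p ^+ k)) ?sumr_const ?card_ord.
Qed.

Lemma mu_EE (u v : V) : u != v ->
  mu R (EE q m) u v = #|[set r : 'I_m | (u \in ep q r) && (v \in ep q r)]|%:R.
Proof.
move=> uv; rewrite /mu (negbTE uv); congr _%:R.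
have -> : [set e in EE q m | (u \in e) && (v \in e)] =
          [set ep q r | r in [set r : 'I_m | (u \in ep q r) && (v \in ep q r)]].
  apply/setP => e; rewrite inE; apply/andP/imsetP.
    by case=> /imsetP [r _ ->] h; exists r => //; rewrite !inE in h *.
  by case=> r hr ->; split; [apply: imset_f | rewrite inE in hr].
by rewrite card_imset //; exact: ep_inj.
Qed.

Lemma mu_0v (v : V) : v != ord0 -> mu R (EE q m) ord0 v = 1.
Proof.
move=> v0; have v0' := v0; rewrite myneq0 in v0'.
rewrite mu_EE ?(eq_sym ord0) //.
have -> : [set r : 'I_m | (ord0 \in ep q r) && (v \in ep q r)] = [set Ordinal (Plt v0')].
  by apply/setP => r; rewrite inE finset.in_set1 mem_ep0 mem_ep //= -val_eqE /= eq_sym.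
by rewrite cards1.
Qed.

Lemma mu_uv (u v : V) : u != ord0 -> v != ord0 -> u != v ->
  mu R (EE q m) u v = if Pv q u == Pv q v then 1 else 0.
Proof.
move=> u0 v0 uv; have u0' := u0; rewrite myneq0 in u0'; have v0' := v0; rewrite myneq0 in v0'.
rewrite mu_EE //; case: eqP => h.
  have -> : [set r : 'I_m | (u \in ep q r) && (v \in ep q r)] = [set Ordinal (Plt u0')].
    by apply/setP => r; rewrite inE finset.in_set1 !mem_ep //= -h andbb -val_eqE /= eq_sym.
  by rewrite cards1.
have -> : [set r : 'I_m | (u \in ep q r) && (v \in ep q r)] = finset.set0.
  apply/setP => r; rewrite inE finset.in_set0 !mem_ep //; apply/negP => /andP [/eqP h1 /eqP h2].
  by apply: h; rewrite h1 h2.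
by rewrite cards0.
Qed.

Lemma shadow_center c p :
  \sum_(v : V) mu R (EE q m) ord0 v * fv c p v = p *+ Nn q m.
Proof.
rewrite big_ord_recl mu_diag mul0r add0r.
rewrite (eq_bigr (fun _ => p)) ?sumr_const ?card_ord // => i _.
have h : lift ord0 i != ord0 :> V by rewrite eq_sym; apply: neq_lift.
by rewrite mu_0v // mul1r fv_ne0.
Qed.

Lemma shadow_petal c p (u : V) (u0 : nat_of_ord u != 0%N) :
  \sum_(v : V) mu R (EE q m) u v * fv c p v = c + p *+ q.+1.
Proof.
set S := ep q (Ordinal (Plt u0)) :\ u :\ ord0.
have u0' : u != ord0 by rewrite myneq0.
rewrite (eq_bigr (fun v => (if v == ord0 then c else 0) + (if v \in S then p else 0))).
  rewrite big_split /= -!big_mkcond /= big_pred1_eq sumr_const card_S //.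
move=> v _; case: (eqVneq v ord0) => [->|v0].
  by rewrite mu_sym mu_0v // mul1r fv0 /S in_setD1 eqxx /= addr0.
rewrite add0r fv_ne0 //.
case: (eqVneq v u) => [->|vu].
  by rewrite mu_diag mul0r /S !inE eqxx /= andbF.
rewrite mu_uv // 1?eq_sym // /S !in_setD1 vu v0 /= mem_ep -?myneq0 //= eq_sym.
by case: ifP; rewrite ?mul1r ?mul0r.
Qed.

End W.

Lemma root_ex (R : realType) (c : R) (n : nat) : 0 < c -> (0 < n)%N ->
  exists t : R, 0 < t /\ t ^+ n = c.
Proof.
move=> c0 n0; exists (c `^ (n%:R^-1)); split; first exact: powR_gt0.
rewrite -powR_mulrn ?powR_ge0 // -powRrM mulVf ?powRr1 ?ltW //.
by rewrite pnatr_eq0 -lt0n.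
Qed.

Lemma witness (R : realType) (q j : nat) : (0 < j)%N ->
  let a := (q.+2 * j)%N in
  let m := (j * (a + q.+1))%N in
  exists (yc yp xc xp : R),
    hyp_principal q.+3 (EE q m) (fv yc yp) /\
    shadow_principal (EE q m) (fv xc xp) /\
    yc ^+ q.+3 = (q.+3)%:R^-1 /\ xc ^+ 2 = a%:R / (2 * a%:R + q.+1%:R).
Proof.
move=> j0 a m.
have a0 : (0 < a)%N by rewrite /a muln_gt0.
have m0 : (0 < m)%N by rewrite /m muln_gt0 j0 addn_gt0 a0.
have hN : Nn q m = (a * (a + q.+1))%N by rewrite /Nn /m /a; ring.
clearbody m; clearbody a.
have [rho [rho0 hrho]] : exists t : R, 0 < t /\ t ^+ q.+3 = m%:R.
  by apply: root_ex => //; rewrite ltr0n.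
have [yp [yp0 hyp]] : exists t : R, 0 < t /\ t ^+ q.+3 = ((m * q.+3)%N%:R)^-1.
  by apply: root_ex => //; rewrite invr_gt0 ltr0n muln_gt0 m0.
pose sT : R := Num.sqrt (a%:R ^+ 2 + (Nn q m)%:R).
have T0 : 0 < sT.
  rewrite /sT sqrtr_gt0; apply: addr_gt0; first by rewrite exprn_gt0 // ltr0n.
  by rewrite ltr0n hN muln_gt0 a0 addn_gt0 orbT.
have hT : sT ^+ 2 = a%:R ^+ 2 + (Nn q m)%:R.
  by rewrite /sT sqr_sqrtr // addr_ge0 // sqr_ge0.
have aR : 0 < a%:R :> R by rewrite ltr0n.
have mR : 0 < m%:R :> R by rewrite ltr0n.
have NR : (Nn q m)%:R = a%:R * (a%:R + q.+1%:R) :> R by rewrite hN natrM natrD.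
exists (rho * yp), yp, (a%:R / sT), sT^-1; split; [|split; [|split]].
- apply: (@hyp_of _ _ _ _ _ rho) => //.
  + exact: EE_unif.
  + by move=> i; rewrite /fv; case: ifP => _; rewrite ?mulr_gt0.
  + rewrite sum_fv exprMn hrho hyp -mulr_natr /Nn !natrM -[q.+3]addn3 -[q.+2]addn2 !natrD.
    field; apply/andP; split; apply: lt0r_neq0 => //.
  + move=> i; case: (eqVneq i ord0) => [->|i0].
      rewrite eig_center fv0 exprMn mulrA -exprS hrho mulr_natl //.
    rewrite myneq0 in i0; rewrite eig_petal // /fv (negbTE i0) /=.
    by rewrite -mulrA -exprS.
- split; first by move=> i; rewrite /fv; case: ifP => _; rewrite ?divr_gt0 ?invr_gt0.
  split.
    rewrite sum_fv exprMn !exprVn -mulr_natr hT; field.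
    by apply: lt0r_neq0; rewrite -hT exprn_gt0.
  exists (a%:R + q.+1%:R) => u; case: (eqVneq u ord0) => [->|u0].
    rewrite shadow_center fv0 -[sT^-1 *+ _]mulr_natr NR; field; exact: lt0r_neq0.
  rewrite myneq0 in u0; rewrite shadow_petal // /fv (negbTE u0) -mulr_natr; field.
  exact: lt0r_neq0.
- by rewrite exprMn hrho hyp natrM invfM mulrA mulfV ?mul1r // lt0r_neq0.
- rewrite expr_div_n hT NR; field.
  have q0 : 0 <= q%:R :> R by rewrite ler0n.
  by apply/andP; split; apply: lt0r_neq0; nra.
Qed.

Local Open Scope classical_set_scope.

Lemma num_bound (R : realType) (q : nat) :
  1/2 - 2 / (q.+3)%:R <= (q.+2 * q.+3)%N%:R / (2 * (q.+2 * q.+3)%N%:R + q.+1%:R) - (q.+3%:R)^-1 :> R.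
Proof.
rewrite natrM -[q.+3]addn3 -[q.+2]addn2 -[q.+1]addn1 !natrD.
have q0 : 0 <= q%:R :> R by rewrite ler0n.
set Q := q%:R.
have D1 : 0 < 2 * ((Q + 2%:R) * (Q + 3%:R)) + (Q + 1) by nra.
have D2 : 0 < Q + 3%:R by lra.
rewrite -subr_ge0.
have -> : (Q + 2%:R) * (Q + 3%:R) / (2 * ((Q + 2%:R) * (Q + 3%:R)) + (Q + 1)) -
   (Q + 3%:R)^-1 - (1 / 2 - 2 / (Q + 3%:R)) =
   (2 * (2 * ((Q + 2%:R) * (Q + 3%:R)) + (Q + 1)) - (Q + 1) * (Q + 3%:R)) /
   (2 * (2 * ((Q + 2%:R) * (Q + 3%:R)) + (Q + 1)) * (Q + 3%:R)).
  by field; apply/andP; split; apply: lt0r_neq0.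
apply: divr_ge0; first nra.
by apply: ltW; rewrite mulr_gt0 // mulr_gt0.
Qed.

Lemma Delta_bounds (R : realType) (q : nat) :
  1/2 - 2 / (q.+3)%:R <= Delta R q.+3 <= 1/2.
Proof.
rewrite /Delta; set S := (X in sup X).
have ub : ubound S (1/2).
  move=> d /= [n [E [y [x [U C Hy Hx ->]]]]]. apply: part1 => //. exact: U.
have [yc [yp [xc [xp [Hy [Hx [ey ex]]]]]]] := @witness R q q.+3 isT.
pose m := (q.+3 * (q.+2 * q.+3 + q.+1))%N.
pose d0 := @Ddist R q.+3 (Nn q m).+1 (fv yc yp) (fv xc xp).
have Sd0 : S d0.
  by exists (Nn q m).+1, (EE q m),
    (fv yc yp), (fv xc xp); split => //; [exact: EE_unif | exact: EE_conn].
have lo : 1/2 - 2 / (q.+3)%:R <= d0.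
  apply: le_trans (num_bound R q) _.
  rewrite -ex -ey.
  apply: (@le_trans _ _ `|fv yc yp ord0 ^+ q.+3 - fv xc xp ord0 ^+ 2|).
    by rewrite !fv0 distrC; apply: ler_norm.
  exact: (le_bigmax 0 (fun v => `|fv yc yp v ^+ q.+3 - fv xc xp v ^+ 2|) ord0).
apply/andP; split.
  apply: le_trans lo _; apply: ub_le_sup => //; by exists (1/2).
by apply: ge_sup => //; exists d0.
Qed.


Unset Implicit Arguments. Set Strict Implicit.
Theorem theorem6p1 (R : realType) :
  (forall (k n : nat) (E : {set {set 'I_n}}) (y x : 'I_n -> R),
      (3 <= k)%N -> kuniform k E -> hconnected E ->
      hyp_principal k E y -> shadow_principal E x ->
      Ddist k y x <= 1 / 2) /\
  (Delta R k @[k --> \oo] --> (2^-1 : R)).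
Proof.
split; first by move=> k n E y x k3 U C Hy Hx; exact: (part1 k3 U C Hy Hx).
apply/cvgrPdist_le => eps eps0.
have e0 : 0 <= 2 / eps by rewrite divr_ge0 // ltW.
pose NN := Num.Def.archi_bound (2 / eps).
move: (nbhs_infty_ge (maxn 3 NN)); apply: filterS => k.
rewrite geq_max => /andP [k3 kN].
have -> : k = (k - 3).+3 by lia.
set q := (k - 3)%N.
have /andP [lo hi] := Delta_bounds R q.
have kR : 0 < q.+3%:R :> R by rewrite ltr0n.
have hN : 2 / eps < q.+3%:R.
  apply: lt_le_trans (archi_boundP e0) _; rewrite ler_nat.
  by apply: leq_trans kN _; rewrite /q; lia.
have h2 : 2 / q.+3%:R <= eps.
  rewrite ler_pdivrMr // mulrC -ler_pdivrMr //; exact: ltW.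
rewrite ler_norml -div1r; move: lo hi h2 eps0; set D := Delta R q.+3; set t := 2 / q.+3%:R; set e := eps; move=> *; apply/andP; split; lra.
Qed.
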